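(* Let $\mathcal{C}$ be a simplicial complex on $[n]$ and $p\ge1$. Then $\mathcal{C}$ is unimodular if and only if $G^p(\mathcal{C})$ is unimodular.
   Context: A simplicial complex on $[n]$ is a family of subsets of $[n]$ closed under subsets; facets are inclusion-maximal faces. $G^p(\mathcal{C})$ denotes the same family of faces as $\mathcal{C}$ but regarded as a complex on ground set $[n+p]$ (so $n+1,\dots,n+p$ lie in no face). $\mathcal{A}_{\mathcal{C}}$ is the $0/1$ matrix with columns indexed by $\mathbf{i}\in\{1,2\}^{\text{ground set}}$ and rows indexed by pairs $(F,\mathbf{e})$, $F$ a facet, $\mathbf{e}\in\{1,2\}^F$; entry $1$ iff $\mathbf{e}=\mathbf{i}|_F$. An integer matrix is unimodular if every circuit (nonzero integer kernel vector with coprime entries and inclusion-minimal support) has entries in $\{0,\pm1\}$; a complex is unimodular if its matrix $\mathcal{A}$ is. *)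

(* Defs.v *)
From mathcomp Require Import all_boot all_order all_algebra.
Set Implicit Arguments. Unset Strict Implicit. Unset Printing Implicit Defensive.
Import GRing.Theory Num.Theory.
Local Open Scope ring_scope.

Definition simplicial (n : nat) (C : {set {set 'I_n}}) : Prop :=
  forall F G : {set 'I_n}, F \in C -> G \subset F -> G \in C.

Definition facet (n : nat) (C : {set {set 'I_n}}) (F : {set 'I_n}) : bool :=
  (F \in C) && [forall G : {set 'I_n}, (G \in C) ==> (F \subset G) ==> (G == F)].

Definition Gp (n p : nat) (C : {set {set 'I_n}}) : {set {set 'I_(n + p)}} :=
  [set (fun F : {set 'I_n} => [set widen_ord (leq_addr p n) x | x in F]) F | F in C].

Definition in_kernel (Rw Cl : finType) (rowP : pred Rw) (A : Rw -> Cl -> int)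
  (u : Cl -> int) : Prop :=
  forall r, rowP r -> \sum_(c : Cl) A r c * u c = 0.

Definition support (Cl : finType) (u : Cl -> int) : {set Cl} := [set c | u c != 0].

Definition circuit (Rw Cl : finType) (rowP : pred Rw) (A : Rw -> Cl -> int)
  (u : Cl -> int) : Prop :=
  [/\ in_kernel rowP A u,
      support u != set0,
      (\big[gcdn/0%N]_(c : Cl) `|u c|%N = 1%N) &
      forall v : Cl -> int, in_kernel rowP A v -> support v != set0 ->
        ~ (support v \proper support u)].

Definition unimodular_mx (Rw Cl : finType) (rowP : pred Rw) (A : Rw -> Cl -> int) : Prop :=
  forall u : Cl -> int, circuit rowP A u -> forall c, u c \in [:: 0; 1; -1].

(* The two-element set {1,2} is encoded as bool.
   Columns: i in {1,2}^[n], i.e. {ffun 'I_n -> bool}.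
   Rows: pairs (F, e) with F a facet and e in {1,2}^F, encoded as a function
   'I_n -> bool which is false outside F. *)
Definition AC_row (n : nat) (C : {set {set 'I_n}})
  : pred ({set 'I_n} * {ffun 'I_n -> bool}) :=
  fun r => facet C r.1 && [forall x, (x \notin r.1) ==> ~~ r.2 x].

Definition AC (n : nat) (r : {set 'I_n} * {ffun 'I_n -> bool})
  (i : {ffun 'I_n -> bool}) : int :=
  if [forall x in r.1, i x == r.2 x] then 1 else 0.

Definition unimodular_complex (n : nat) (C : {set {set 'I_n}}) : Prop :=
  unimodular_mx (AC_row C) (@AC n).

(* Main.v *)
Require Import Defs.
From mathcomp Require Import all_boot all_order all_algebra.
From mathcomp Require Import zify.
Set Implicit Arguments. Unset Strict Implicit. Unset Printing Implicit Defensive.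
Import GRing.Theory Num.Theory.

Section Abs.
Local Open Scope ring_scope.
Variables (Rw Cl Rw' Cl' : finType) (rP : pred Rw) (A : Rw -> Cl -> int)
  (rP' : pred Rw') (B : Rw' -> Cl' -> int) (pi : Cl' -> Cl) (sg : Cl -> Cl').
Hypothesis Hs : cancel sg pi.
Hypothesis H1 : forall r, rP r -> exists2 r', rP' r' & forall i, B r' i = A r (pi i).
Hypothesis H2 : forall r', rP' r' -> exists2 r, rP r & forall i, B r' i = A r (pi i).

Definition push (v : Cl' -> int) : Cl -> int := fun j => \sum_(i | pi i == j) v i.

Lemma sum_push (F : Cl -> int) v :
  \sum_i F (pi i) * v i = \sum_j F j * push v j.
Proof.
rewrite /push (partition_big pi xpredT) //=.
apply: eq_bigr => j _; rewrite mulr_sumr; by apply: eq_bigr => i /eqP ->.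
Qed.

Lemma ker_push v w : (forall j, push v j = w j) ->
  in_kernel rP' B v <-> in_kernel rP A w.
Proof.
move=> Hw; split.
- move=> Hk r /H1 [r' Hr' HB].
  have := Hk r' Hr'; under eq_bigr => i _ do rewrite HB.
  rewrite sum_push => E; rewrite -[RHS]E; apply: eq_bigr => j _; by rewrite Hw.
- move=> Hk r' /H2 [r Hr HB].
  under eq_bigr => i _ do rewrite HB.
  rewrite sum_push -[RHS](Hk r Hr); apply: eq_bigr => j _; by rewrite Hw.
Qed.

Lemma gcd1P (T : finType) (u : T -> int) :
  (\big[gcdn/0%N]_(c : T) `|u c|%N = 1%N) <-> (forall d, (forall c, d %| `|u c|)%N -> d = 1%N).
Proof.
split.
- move=> H d Hd; have : (d %| \big[gcdn/0%N]_(c : T) `|u c|%N)%N by apply/dvdn_biggcdP.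
  by rewrite H dvdn1 => /eqP.
- move=> H; apply: H => c; exact: (@biggcdn_inf _ c).
Qed.

Lemma sum_delta (F : Cl' -> int) c : \sum_i F i * (i == c)%:R = F c.
Proof.
rewrite (bigD1 c) //= eqxx mulr1 big1 ?addr0 // => i /negbTE ->; by rewrite mulr0.
Qed.

Lemma sum_two (F : Cl' -> int) u c1 c2 : c1 != c2 ->
  (forall c, u c != 0 -> c = c1 \/ c = c2) ->
  \sum_i F i * u i = F c1 * u c1 + F c2 * u c2.
Proof.
move=> H12 Hu; rewrite (bigD1 c1) //= (bigD1 c2) /=; last by rewrite eq_sym.
rewrite big1 ?addr0 // => i /andP [i2 i1].
case: (eqVneq (u i) 0) => [-> | /Hu [E|E]]; first by rewrite mulr0.
- by move: i1 i2; rewrite E eqxx.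
- by move: i1 i2; rewrite E eqxx.
Qed.

Lemma abs1 (x : int) : `|x|%N = 1%N -> x \in [:: 0; 1; -1].
Proof. case: x => [[|[|k]]|[|k]] //=. Qed.

Lemma push_zero w j : (forall c, pi c = j -> w c = 0) -> push w j = 0.
Proof. move=> H; apply: big1 => i /eqP; exact: H. Qed.

Lemma push_at w c : (forall c1 c2, w c1 != 0 -> w c2 != 0 -> pi c1 = pi c2 -> c1 = c2) ->
  w c != 0 -> push w (pi c) = w c.
Proof.
move=> Hi Hc; rewrite /push (bigD1 c) //= big1 ?addr0 // => i /andP [/eqP Ep ic].
case: (eqVneq (w i) 0) => // Hwi.
by rewrite (Hi _ _ Hwi Hc Ep) eqxx in ic.
Qed.

Lemma push_ex w j : push w j != 0 -> exists c, pi c = j /\ w c != 0.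
Proof.
move=> H; case: (boolP [exists c, (pi c == j) && (w c != 0)]).
- by move=> /existsP [c /andP [/eqP ? ?]]; exists c.
- move=> /existsPn Hn; rewrite push_zero ?eqxx // in H => c Hc.
  by move: (Hn c); rewrite Hc eqxx /= negbK => /eqP.
Qed.


Lemma supp_sub (T : finType) (v u : T -> int) :
  Defs.support v \proper Defs.support u -> forall c, v c != 0 -> u c != 0.
Proof. move=> /properP [/subsetP S _] c Hc; have := S c; rewrite !inE; exact. Qed.

Lemma supp_strict (T : finType) (v u : T -> int) :
  Defs.support v \proper Defs.support u -> exists c, u c != 0 /\ v c = 0.
Proof. move=> /properP [_ [c]]; rewrite !inE negbK => K1 /eqP K2; by exists c. Qed.

Lemma UB_UA : unimodular_mx rP' B -> unimodular_mx rP A.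
Proof.
move=> UB u [Hk Hs0 Hg Hmin] j.
pose u' := fun c => if c == sg (pi c) then u (pi c) else 0.
have u'sg : forall j, u' (sg j) = u j by move=> j'; rewrite /u' Hs eqxx.
have u'sup : forall c, u' c != 0 -> c = sg (pi c).
  by move=> c; rewrite /u'; case: (eqVneq c (sg (pi c))) => // _; rewrite eqxx.
have push_sg : forall w, (forall c, w c != 0 -> c = sg (pi c)) -> forall j, push w j = w (sg j).
  move=> w Hw j'; rewrite /push (bigD1 (sg j')) /=; last by rewrite Hs.
  rewrite big1 ?addr0 // => i /andP [/eqP Ep ni].
  case: (eqVneq (w i) 0) => // /Hw Ei.
  by move: ni; rewrite Ei Ep eqxx.
have Ku' : in_kernel rP' B u'.
  apply: (proj2 (ker_push (v:=u') (w:=u) _)) Hk => j'; by rewrite push_sg // u'sg.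
have circ : circuit rP' B u'.
  split => //.
  - case/set0Pn: Hs0 => j0; rewrite inE => Hj0.
    by apply/set0Pn; exists (sg j0); rewrite inE u'sg.
  - apply/(gcd1P u') => d Hd; apply: (proj1 (gcd1P u) Hg) => j'; by rewrite -u'sg.
  - move=> v' Kv' Hv0 Hprop.
    have v'sup : forall c, v' c != 0 -> c = sg (pi c).
      by move=> c Hc; apply: u'sup; exact: (supp_sub Hprop Hc).
    pose v := fun j => v' (sg j).
    apply: (Hmin v).
    + apply: (proj1 (ker_push (v:=v') (w:=v) _)) Kv' => j'; exact: push_sg.
    + case/set0Pn: Hv0 => c; rewrite inE => Hc.
      by apply/set0Pn; exists (pi c); rewrite inE /v -(v'sup _ Hc).
    + apply/properP; split.
        apply/subsetP => j'; rewrite !inE /v => H; rewrite -u'sg. exact: (supp_sub Hprop H).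
      have [c [Hc1 Hc2]] := supp_strict Hprop.
      exists (pi c); rewrite inE.
        by rewrite -u'sg -(u'sup _ Hc1).
      by rewrite /v -(u'sup _ Hc1) Hc2 eqxx.
have := UB u' circ (sg j); by rewrite u'sg.
Qed.

Lemma UA_UB : unimodular_mx rP A -> unimodular_mx rP' B.
Proof.
move=> UA u' [Hk Hs0 Hg Hmin] c.
case: (boolP [exists c1, exists c2, [&& c1 != c2, pi c1 == pi c2, u' c1 != 0 & u' c2 != 0]]).
- case/existsP => c1 /existsP [c2 /and4P [H12 /eqP Hp Hu1 Hu2]].
  pose w := fun c : Cl' => ((c == c1)%:R - (c == c2)%:R : int).
  have Kw : in_kernel rP' B w.
    move=> r' /H2 [r Hr HB]; rewrite /w.
    under eq_bigr => i _ do rewrite mulrBr.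
    by rewrite sumrB !sum_delta !HB Hp subrr.
  have Hsupp : forall c, u' c != 0 -> c = c1 \/ c = c2.
    move=> c0 Hc0; case: (boolP ((c0 == c1) || (c0 == c2))) => [/orP [/eqP|/eqP]|Hn]; [by left|by right|].
    exfalso; apply: (Hmin w Kw).
    * by apply/set0Pn; exists c1; rewrite inE /w eqxx (negbTE H12) subr0.
    * apply/properP; split.
        apply/subsetP => c3; rewrite !inE /w.
        case: (eqVneq c3 c1) => [-> _ //|n1]; case: (eqVneq c3 c2) => [-> _ //|n2].
        by rewrite subrr eqxx.
      exists c0; rewrite inE //.
      rewrite /w; move: Hn; rewrite negb_or => /andP [/negbTE -> /negbTE ->].
      by rewrite subrr eqxx.
  have Hsum : u' c2 = - u' c1.
    case: (eqVneq (u' c1 + u' c2) 0) => [E|Ns].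
      by apply/eqP; rewrite -addr_eq0 addrC E.
    exfalso.
    have Acol : forall r, rP r -> A r (pi c1) = 0.
      move=> r /H1 [r' Hr' HB]; have := Hk r' Hr'.
      rewrite (sum_two _ H12 Hsupp) !HB -Hp -mulrDr => /eqP.
      by rewrite mulf_eq0 (negbTE Ns) orbF => /eqP.
    apply: (Hmin (fun c => (c == c1)%:R)).
    * by move=> r' /H2 [r Hr HB]; rewrite sum_delta HB Acol.
    * by apply/set0Pn; exists c1; rewrite inE eqxx.
    * apply/properP; split.
        by apply/subsetP => c3; rewrite !inE; case: (eqVneq c3 c1) => [->|] //; rewrite eqxx.
      exists c2; rewrite inE //.
      by rewrite (eq_sym c2) (negbTE H12) eqxx.
  have Hd : `|u' c1|%N = 1%N.
    apply: (proj1 (gcd1P u') Hg) => c3.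
    case: (eqVneq (u' c3) 0) => [->|/Hsupp [->|->]]; [by rewrite dvdn0 | by [] | by rewrite Hsum abszN].
  case: (eqVneq (u' c) 0) => [->|/Hsupp [->|->]]; [by rewrite inE eqxx | exact: abs1 |].
  by rewrite Hsum; apply: abs1; rewrite abszN.
- move=> /existsPn Hn.
  have Hinj : forall c1 c2, u' c1 != 0 -> u' c2 != 0 -> pi c1 = pi c2 -> c1 = c2.
    move=> c1 c2 H1' H2' E; apply/eqP; apply: contraT => N.
    by move: (Hn c1) => /existsPn /(_ c2); rewrite N E eqxx H1' H2'.
  pose u := push u'.
  have Hu : forall c, u' c != 0 -> u (pi c) = u' c := fun c => push_at Hinj.
  have Ku : in_kernel rP A u := proj1 (ker_push (fun j => erefl)) Hk.
  have circ : circuit rP A u.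
    split => //.
    - case/set0Pn: Hs0 => c0; rewrite inE => Hc0.
      by apply/set0Pn; exists (pi c0); rewrite inE Hu.
    - apply/(gcd1P u) => d Hd; apply: (proj1 (gcd1P u') Hg) => c0.
      case: (eqVneq (u' c0) 0) => [->|H]; [by rewrite dvdn0 | by rewrite -(Hu _ H)].
    - move=> v Kv Hv0 Hprop.
      pose v' := fun c => if u' c != 0 then v (pi c) else 0.
      have Hex : forall j, u j != 0 -> exists c, pi c = j /\ u' c != 0 := push_ex (w:=u').
      have v'sub : forall c, v' c != 0 -> u' c != 0.
        by move=> c0; rewrite /v'; case: ifP => //; rewrite eqxx.
      have Pv : forall j, push v' j = v j.
        move=> j; case: (eqVneq (v j) 0) => [Ej|Nj].
          rewrite Ej; apply: push_zero => c0 Ec; rewrite /v' Ec Ej; by case: ifP.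
        have [c0 [Ec0 Hc0]] := Hex j (supp_sub Hprop Nj).
        have Hv'c0 : v' c0 = v j by rewrite /v' Hc0 Ec0.
        rewrite -Ec0 push_at //; first by rewrite Ec0.
          by move=> a b Ha Hb; apply: Hinj; apply: v'sub.
        by rewrite Hv'c0.
      apply: (Hmin v').
      + exact: (proj2 (ker_push Pv)) Kv.
      + case/set0Pn: Hv0 => j; rewrite inE => Nj.
        have [c0 [Ec0 Hc0]] := Hex j (supp_sub Hprop Nj).
        by apply/set0Pn; exists c0; rewrite inE /v' Hc0 Ec0.
      + apply/properP; split.
          by apply/subsetP => c0; rewrite !inE; exact: v'sub.
        have [j [Hj1 Hj2]] := supp_strict Hprop.
        have [c0 [Ec0 Hc0]] := Hex j Hj1.
        exists c0; rewrite inE //.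
        by rewrite /v' Hc0 Ec0 Hj2 eqxx.
  case: (eqVneq (u' c) 0) => [->|Hc]; first by rewrite inE eqxx.
  rewrite -Hu //; exact: UA circ (pi c).
Qed.

End Abs.

Section Conc.
Local Open Scope ring_scope.
Variables (n p : nat) (C : {set {set 'I_n}}).

Definition W (x : 'I_n) : 'I_(n + p) := widen_ord (leq_addr p n) x.
Definition WF (F : {set 'I_n}) : {set 'I_(n + p)} := [set W x | x in F].
Definition piC (i : {ffun 'I_(n + p) -> bool}) : {ffun 'I_n -> bool} :=
  [ffun x => i (W x)].
Definition sgC (j : {ffun 'I_n -> bool}) : {ffun 'I_(n + p) -> bool} :=
  [ffun y => match split y with inl x => j x | inr _ => false end].

Lemma W_inj : injective W.
Proof. move=> x y E; apply: val_inj; exact: (congr1 val E). Qed.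

Lemma WF_inj : injective WF.
Proof. exact: imset_inj W_inj. Qed.

Lemma memW x F : (W x \in WF F) = (x \in F).
Proof. exact: mem_imset W_inj. Qed.

Lemma splitW x : split (W x) = inl x.
Proof.
case: splitP => [x' E|k E]; first by congr inl; apply: val_inj; exact: (esym E).
have E' : (x : nat) = (n + k)%N := E; have := ltn_ord x; rewrite E'; lia.
Qed.

Lemma sgK : cancel sgC piC.
Proof. by move=> j; apply/ffunP => x; rewrite !ffunE splitW. Qed.

Lemma subW F G : (WF F \subset WF G) = (F \subset G).
Proof.
apply/idP/idP; last exact: imsetS.
move=> /subsetP H; apply/subsetP => x Hx; by rewrite -memW; apply: H; rewrite memW.
Qed.

Lemma GpE : Gp p C = [set WF F | F in C].
Proof. by []. Qed.

Lemma memGp F : (WF F \in Gp p C) = (F \in C).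
Proof. rewrite GpE; exact: mem_imset WF_inj. Qed.

Lemma facetW F : facet (Gp p C) (WF F) = facet C F.
Proof.
apply/idP/idP.
- move/andP => [H1 /forallP H2]; apply/andP; split; first by rewrite -memGp.
  apply/forallP => G; apply/implyP => HG; apply/implyP => HFG.
  have := H2 (WF G); rewrite memGp HG subW HFG /= => /eqP /WF_inj ->.
  by rewrite eqxx.
- move/andP => [H1 /forallP H2]; apply/andP; split; first by rewrite memGp.
  apply/forallP => G'; apply/implyP; rewrite GpE => /imsetP [G HG ->].
  apply/implyP; rewrite subW => HFG; rewrite (inj_eq WF_inj).
  exact: (implyP (implyP (H2 G) HG)).
Qed.

Lemma facetGp F' : facet (Gp p C) F' -> exists F, F' = WF F /\ facet C F.
Proof.
move=> H; have := H; move/andP => [H1 _]; move: H1; rewrite GpE => /imsetP [F _ E].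
by exists F; split => //; rewrite -facetW -E.
Qed.

Lemma ACW F e' i : Defs.AC (WF F, e') i = Defs.AC (F, piC e') (piC i).
Proof.
rewrite /Defs.AC /=.
have -> : [forall x in WF F, i x == e' x] = [forall x in F, piC i x == piC e' x].
  apply/forallP/forallP => H x.
  - apply/implyP => Hx; rewrite !ffunE; apply: (implyP (H (W x))); by rewrite memW.
  - apply/implyP => /imsetP [y Hy ->]; have := implyP (H y) Hy; by rewrite !ffunE.
by [].
Qed.

Lemma HC1 r : AC_row C r -> exists2 r', AC_row (Gp p C) r' &
  forall i, Defs.AC r' i = Defs.AC r (piC i).
Proof.
case: r => F e; rewrite /AC_row /= => /andP [Hf /forallP He].
exists (WF F, sgC e).
  rewrite /= facetW Hf /=; apply/forallP => y; apply/implyP; rewrite ffunE.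
  case: splitP => [x Ex|k _] //.
  have -> : y = W x by apply: val_inj.
  by rewrite memW => Hx; exact: (implyP (He x) Hx).
by move=> i; rewrite ACW sgK.
Qed.

Lemma HC2 r' : AC_row (Gp p C) r' -> exists2 r, AC_row C r &
  forall i, Defs.AC r' i = Defs.AC r (piC i).
Proof.
case: r' => F' e; rewrite /AC_row /= => /andP [/facetGp [F [-> Hf]] /forallP He].
exists (F, piC e).
  rewrite /= Hf /=; apply/forallP => x; apply/implyP => Hx; rewrite ffunE.
  by apply: (implyP (He (W x))); rewrite memW.
by move=> i; rewrite ACW.
Qed.

End Conc.

Theorem proposition3p17 (n p : nat) (C : {set {set 'I_n}}) :
  simplicial C -> (1 <= p)%N ->
  (unimodular_complex C <-> unimodular_complex (Gp p C)).
Proof.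
move=> _ _; rewrite /unimodular_complex; split.
- apply: (UA_UB (pi:=@piC n p)); [exact: HC1 | exact: HC2].
- apply: (UB_UA (@sgK n p)); [exact: HC1 | exact: HC2].
Qed.
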